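(* Let $R$ be a semiprime ring with identity and $f$ an automorphism of $R$. (a) If $R$ is commutative, then the following are equivalent: (i) $f$ is $X$-inner; (ii) $\mathrm{ann}_R((\mathrm{id}-f)(R))\neq 0$; (iii) there is a nonzero ideal $I$ of $R$ such that $f$ is the identity on $I$. (b) If $R$ is commutative and von Neumann regular, then $f$ is $X$-inner if and only if there exists a nonzero idempotent $e\in R$ such that $f$ is the identity on $eR$. (c) If $R$ is von Neumann regular and $f$ is $X$-inner, then $f$ is corner-inner.
   Context: An automorphism $f$ of a semiprime ring $R$ is $X$-inner if there is a nonzero element $u$ of the left Martindale quotient ring of $R$ with $f(r)u=ur$ for all $r\in R$. An automorphism $f$ of $R$ is corner-inner if there exist a nonzero idempotent $e\in R$ and, setting $e'=f^{-1}(e)$, elements $u\in eRe'$ and $v\in e'Re$ such that (a) $uv=e$ and $vu=e'$; (b) $f(x)=uxv$ for all $x\in e'Re'$; (c) $f^{-1}(y)=vyu$ for all $y\in eRe$. Here $\mathrm{ann}_R(S)=\{x\in R: sx=0 \text{ for all } s\in S\}$. *)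

(* Defs.v *)
From mathcomp Require Import all_boot all_algebra.
Set Implicit Arguments. Unset Strict Implicit. Unset Printing Implicit Defensive.
Import GRing.Theory.
Local Open Scope ring_scope.

Definition is_ideal (R : pzRingType) (I : R -> Prop) : Prop :=
  [/\ I 0,
      (forall x y, I x -> I y -> I (x + y)),
      (forall x, I x -> I (- x)),
      (forall r x, I x -> I (r * x)) &
      (forall r x, I x -> I (x * r))].

Definition nonzero_set (R : pzRingType) (S : R -> Prop) : Prop :=
  exists2 x, S x & x != 0.

Definition semiprime (R : pzRingType) : Prop :=
  forall I : R -> Prop, is_ideal I ->
    (forall x y, I x -> I y -> x * y = 0) -> forall x, I x -> x = 0.

Definition commutative_ring (R : pzRingType) : Prop :=
  forall x y : R, x * y = y * x.

Definition von_neumann_regular (R : pzRingType) : Prop :=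
  forall a : R, exists b : R, a * b * a = a.

Definition automorphism (R : pzRingType) (f : {rmorphism R -> R}) : Prop :=
  bijective f.

Definition ann (R : pzRingType) (S : R -> Prop) : R -> Prop :=
  fun x => forall s, S s -> s * x = 0.

(* A dense ideal (the ideals defining the Martindale quotient ring of a
   semiprime ring): a two-sided ideal with zero annihilator. *)
Definition dense_ideal (R : pzRingType) (I : R -> Prop) : Prop :=
  is_ideal I /\ (forall x, ann I x -> x = 0).

(* An element of the left Martindale quotient ring Q of R is (the class of)
   a left R-module map phi : I -> R, with I a dense ideal, written on the
   right (x q := phi x for x in I).  For r in R, x (f(r) q) = phi (x f(r))
   and x (q r) = phi(x) r, and for semiprime R two such maps define the
   same element of Q iff they agree on I.  Hence f is X-inner iff: *)
Definition X_inner (R : pzRingType) (f : R -> R) : Prop :=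
  exists (I : R -> Prop) (phi : R -> R),
    [/\ dense_ideal I,
        (forall x y, I x -> I y -> phi (x + y) = phi x + phi y),
        (forall r x, I x -> phi (r * x) = r * phi x),
        (exists2 x, I x & phi x != 0) &
        (forall r x, I x -> phi (x * f r) = phi x * r)].

(* Corner-inner automorphisms.  Since f is injective, the condition
   f^{-1}(y) = v y u is expressed as f (v y u) = y, and e' = f^{-1}(e)
   as f e' = e. *)
Definition corner_inner (R : pzRingType) (f : R -> R) : Prop :=
  exists e e' u v : R,
    [/\ e * e = e, e != 0 & f e' = e] /\
    [/\ (exists r, u = e * r * e'), (exists r, v = e' * r * e),
        u * v = e & v * u = e'] /\
    (forall x, (exists r, x = e' * r * e') -> f x = u * x * v) /\
    (forall y, (exists r, y = e * r * e) -> f (v * y * u) = y).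

(* Main.v *)
Require Import Defs.
From mathcomp Require Import all_boot all_algebra.
Import GRing.Theory.
Local Open Scope ring_scope.

Lemma part_c (R : pzRingType) (f : {rmorphism R -> R}) :
  automorphism f -> von_neumann_regular R -> X_inner f -> corner_inner f.
Proof.
move=> [g fK gK] vnr [I [phi [[[I0 Iadd Ineg Il Ir] _] padd plin [x0 Ix0 nz] intw]]].
have [b hb] := vnr x0.
set E := b * x0.
have IE : I E by exact: Il.
have EE : E * E = E by rewrite /E -mulrA (mulrA x0 b x0) hb.
set p := g E.
have fp : f p = E by rewrite /p gK.
have pp : p * p = p by apply: (can_inj fK); rewrite rmorphM fp EE.
set k := phi E.
have knz : k != 0.
  apply: contraNneq nz => k0.
  by apply/eqP; rewrite -hb -mulrA -/E (plin x0 E IE) -/k k0 mulr0.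
clearbody E.
have Ek : E * k = k by rewrite /k -plin // EE.
have kp : k * p = k by rewrite /k -intw // fp EE.
have intp : forall x, p * x = x -> x * p = x -> f x * k = k * x.
  move=> x px xp.
  have h1 : f x * E = f x by rewrite -fp -rmorphM xp.
  have h2 : E * f x = f x by rewrite -fp -rmorphM px.
  by rewrite /k -plin // h1 -{1}h2 intw.
have kdef : phi E = k by [].
clearbody k.
have [c hc] := vnr k.
set v0 := p * c * E.
have kv0k : k * v0 * k = k.
  by rewrite /v0 !mulrA kp -(mulrA (k * c) E k) Ek hc.
have pv0 : p * v0 = v0 by rewrite /v0 !mulrA pp.
have v0E : v0 * E = v0 by rewrite /v0 -!mulrA EE.
clearbody v0.
set v := v0 * k * v0.
have kvk : k * v * k = k by rewrite /v !mulrA kv0k kv0k.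
have vkv : v * k * v = v.
  have -> : v * k * v = v0 * (k * v0 * k) * (v0 * k * v0) by rewrite /v !mulrA.
  rewrite kv0k.
  have -> : v0 * k * (v0 * k * v0) = v0 * (k * v0 * k) * v0 by rewrite !mulrA.
  by rewrite kv0k.
have pv : p * v = v by rewrite /v !mulrA pv0.
have vE : v * E = v by rewrite /v -!mulrA v0E.
clearbody v.
have Iv : I v by rewrite -vE; apply: Il.
have phiv : phi v = v * k.
  by rewrite -{1}vE (plin v E IE) kdef.
pose e1 := k * v.
pose e2 := v * k.
have e1def : e1 = k * v by [].
have e2def : e2 = v * k by [].
clearbody e1 e2.
have pe2 : p * e2 = e2 by rewrite e2def mulrA pv.
have e2p : e2 * p = e2 by rewrite e2def -mulrA kp.
have e1e1 : e1 * e1 = e1 by rewrite e1def mulrA kvk.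
have e2e2 : e2 * e2 = e2 by rewrite e2def mulrA vkv.
have fe2k : f e2 * k = k by rewrite intp // e2def mulrA kvk.
have key : e2 * g e1 = e2.
  by rewrite e2def -phiv -intw // gK e1def mulrA vkv.
have fe2 : f e2 = e1.
  have h := congr1 f key; rewrite rmorphM gK in h.
  by rewrite -h e1def mulrA fe2k.
have fcorner : forall x, (exists r, x = e2 * r * e2) -> f x = k * x * v.
  move=> x [r ->].
  have px : p * (e2 * r * e2) = e2 * r * e2 by rewrite !mulrA pe2.
  have xp : e2 * r * e2 * p = e2 * r * e2 by rewrite -mulrA e2p.
  have xe : e2 * r * e2 = e2 * r * e2 * e2 by rewrite -(mulrA (e2 * r) e2 e2) e2e2.
  by rewrite {1}xe rmorphM fe2 e1def mulrA intp.
exists e1, e2, k, v; split; [split|split; [split|split]].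
- exact: e1e1.
- apply: contraNneq knz => e10; by rewrite -kvk -e1def e10 mul0r.
- exact: fe2.
- by exists k; rewrite e1def e2def !mulrA kvk kvk.
- by exists v; rewrite e1def e2def !mulrA vkv vkv.
- by [].
- by [].
- exact: fcorner.
- move=> y0 [r ->].
  have [y ye] : exists y, y = e1 * r * e1 by eexists.
  rewrite -ye.
  rewrite fcorner; last first.
    exists (v * y * k); rewrite e2def.
    have -> : v * k * (v * y * k) * (v * k) = (v * k * v) * y * (k * v * k)
      by rewrite !mulrA.
    by rewrite vkv kvk.
  have -> : k * (v * y * k) * v = (k * v) * y * (k * v) by rewrite !mulrA.
  rewrite -e1def ye.
  have -> : e1 * (e1 * r * e1) * e1 = (e1 * e1) * r * (e1 * e1) by rewrite !mulrA.
  by rewrite e1e1.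
Qed.

Section PartAB.
Variables (R : pzRingType) (f : {rmorphism R -> R}).
Hypotheses (sp : semiprime R) (aut : automorphism f) (cm : commutative_ring R).

Let S := fun s : R => exists r, s = r - f r.

Lemma ann_ideal : is_ideal (ann S).
Proof.
split.
- by move=> s _; rewrite mulr0.
- by move=> x y hx hy s Ss; rewrite mulrDr hx // hy // addr0.
- by move=> x hx s Ss; rewrite mulrN hx // oppr0.
- by move=> r x hx s Ss; rewrite mulrA (cm s r) -mulrA hx // mulr0.
- by move=> r x hx s Ss; rewrite mulrA hx // mul0r.
Qed.

Lemma ann_fix x : ann S x -> f x = x.
Proof.
move=> hx; have [g fK gK] := aut.
have [_ Iadd Ineg _ _] := ann_ideal.
have hfx : ann S (f x).
  move=> s [r ->].
  have -> : r - f r = f (g r - f (g r)) by rewrite rmorphB gK.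
  by rewrite -rmorphM hx ?rmorph0 //; exists (g r).
set y := x - f x.
have hy : ann S y by apply: Iadd => //; apply: Ineg.
have yy : y * y = 0 by apply: hy; exists x.
have y0 : y = 0.
  pose J := fun z => exists t, z = y * t.
  apply: (sp J); last by exists 1; rewrite mulr1.
  - split.
    + by exists 0; rewrite mulr0.
    + by move=> a b [t1 ->] [t2 ->]; exists (t1 + t2); rewrite mulrDr.
    + by move=> a [t ->]; exists (- t); rewrite mulrN.
    + by move=> r a [t ->]; exists (r * t); rewrite mulrA (cm r y) -mulrA.
    + by move=> r a [t ->]; exists (t * r); rewrite mulrA.
  - move=> a b [t1 ->] [t2 ->].
    by rewrite -mulrA (mulrA t1) (cm t1 y) -!mulrA (mulrA y y) yy !mul0r.
by apply/eqP; rewrite eq_sym -subr_eq0 -/y y0.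
Qed.

Lemma i_ii : X_inner f -> nonzero_set (ann S).
Proof.
move=> [I [phi [_ padd plin [x0 Ix0 nz] intw]]].
exists (phi x0); last exact: nz.
move=> s [r ->].
by rewrite mulrBl -(cm (phi x0) r) -intw // (cm x0) plin // subrr.
Qed.

Lemma ii_i : nonzero_set (ann S) -> X_inner f.
Proof.
move=> [a ha anz].
exists (fun _ => True), (fun x => a * x); split.
- split; first by split.
  by move=> x hx; rewrite -(mul1r x); apply: hx.
- by move=> x y _ _; rewrite mulrDr.
- by move=> r x _; rewrite !mulrA (cm a r).
- by exists 1; rewrite ?mulr1.
- move=> r x _.
  have h : r * a = f r * a.
    by apply/eqP; rewrite -subr_eq0 -mulrBl; apply/eqP; apply: ha; exists r.
  by rewrite (cm a (x * f r)) -(mulrA x (f r) a) -h (mulrA x r a) (cm (x * r) a) mulrA.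
Qed.

Lemma ii_iii : nonzero_set (ann S) ->
  exists I : R -> Prop, [/\ is_ideal I, nonzero_set I & forall x, I x -> f x = x].
Proof.
move=> h; exists (ann S); split => //; [exact: ann_ideal | exact: ann_fix].
Qed.

Lemma fix_ann a : (forall r, f (r * a) = r * a) -> ann S a.
Proof.
move=> h s [r ->].
have fa : f a = a by rewrite -(mul1r a) h.
have e : f r * a = r * a by rewrite -{1}fa -rmorphM h.
by rewrite mulrBl e subrr.
Qed.

Lemma iii_ii : (exists I : R -> Prop,
  [/\ is_ideal I, nonzero_set I & forall x, I x -> f x = x]) -> nonzero_set (ann S).
Proof.
move=> [I [[_ _ _ Il _] [a Ia anz] fI]].
exists a => //; apply: fix_ann => r; apply: fI; exact: Il.
Qed.

End PartAB.

Theorem proposition2p6 (R : pzRingType) (f : {rmorphism R -> R}) :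
  semiprime R -> automorphism f ->
  (* (a) *)
  (commutative_ring R ->
     (X_inner f <-> nonzero_set (ann (fun s => exists r, s = r - f r))) /\
     (nonzero_set (ann (fun s => exists r, s = r - f r)) <->
        exists I : R -> Prop,
          [/\ is_ideal I, nonzero_set I & forall x, I x -> f x = x])) /\
  (* (b) *)
  (commutative_ring R -> von_neumann_regular R ->
     (X_inner f <->
        (exists e : R, [/\ e * e = e, e != 0 & forall r, f (e * r) = e * r]))) /\
  (* (c) *)
  (von_neumann_regular R -> X_inner f -> corner_inner f).
Proof.
move=> sp aut; split; [|split].
- move=> cm; split; split.
  + exact: (@i_ii R f cm).
  + exact: (@ii_i R f cm).
  + exact: (@ii_iii R f sp aut cm).
  + exact: (@iii_ii R f).
- move=> cm vnr; split.
  + move=> /(@i_ii R f cm) [a ha anz].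
    have [b hb] := vnr a.
    have [_ _ _ _ Ir] := @ann_ideal R f cm.
    exists (a * b); split.
    * by rewrite mulrA hb.
    * by apply: contraNneq anz => e0; rewrite -hb e0 mul0r.
    * move=> r; apply: (@ann_fix R f sp aut cm); rewrite -mulrA; exact: Ir.
  + move=> [e [ee enz fe]]; apply: (@ii_i R f cm); exists e => //.
    by apply: (@fix_ann R f) => r; rewrite (cm r) fe.
- exact: part_c.
Qed.
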